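(* $\mathrm{EquSLP}\leq_{\mathrm{P}}\mathrm{2SoSSLP}$ (polynomial-time many-one reduction).
   Context: A (division-free, constant-free) SLP computing an integer is a sequence $(b_0,\dots,b_m)$ of integers with $b_0=1$ and $b_i=b_j\circ_i b_k$ for some $j,k<i$, $\circ_i\in\{+,-,\times\}$; it computes $b_m$. $\mathrm{EquSLP}$: given an SLP computing $N\in\mathbb{Z}$, decide whether $N=0$. $\mathrm{2SoSSLP}$: given an SLP computing $N\in\mathbb{Z}$, decide whether $N=a^2+b^2$ for some integers $a,b$. *)

(* Defs.v *)
From Stdlib Require Import ZArith List Arith.
Import ListNotations.

Inductive op := OAdd | OSub | OMul.

(* An SLP (b_0,...,b_m) is given by its instructions for b_1..b_m:
   the t-th instruction (t = 0..m-1, defining b_{t+1}) is (o, j, k)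
   meaning b_{t+1} = b_j o b_k. *)
Definition slp := list (op * nat * nat).

Fixpoint valid_from (t : nat) (s : slp) : Prop :=
  match s with
  | [] => True
  | (o, j, k) :: s' => j <= t /\ k <= t /\ valid_from (S t) s'
  end.
Definition slp_valid (s : slp) : Prop := valid_from 0 s.

Definition apply_op (o : op) (x y : Z) : Z :=
  match o with OAdd => (x + y)%Z | OSub => (x - y)%Z | OMul => (x * y)%Z end.

Fixpoint slp_vals_aux (acc : list Z) (s : slp) : list Z :=
  match s with
  | [] => acc
  | (o, j, k) :: s' =>
      slp_vals_aux (acc ++ [apply_op o (nth j acc 0%Z) (nth k acc 0%Z)]) s'
  end.
Definition slp_vals (s : slp) : list Z := slp_vals_aux [1%Z] s.
Definition slp_value (s : slp) : Z := last (slp_vals s) 1%Z.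

Fixpoint enc_pos (p : positive) : list bool :=
  match p with
  | xH => [true]
  | xO q => enc_pos q ++ [false]
  | xI q => enc_pos q ++ [true]
  end.
(* binary, most significant bit first; 0 is the empty string *)
Definition enc_nat (n : nat) : list bool :=
  match N.of_nat n with N0 => [] | Npos p => enc_pos p end.
(* self-delimiting: every bit doubled, then terminator 01 *)
Definition enc_nat_sd (n : nat) : list bool :=
  flat_map (fun b => [b; b]) (enc_nat n) ++ [false; true].
Definition enc_op (o : op) : list bool :=
  match o with OAdd => [false; false] | OSub => [false; true] | OMul => [true; false] end.
Definition enc_instr (i : op * nat * nat) : list bool :=
  let '(o, j, k) := i in enc_op o ++ enc_nat_sd j ++ enc_nat_sd k.
Definition enc_slp (s : slp) : list bool := flat_map enc_instr s.

Definition EquSLP (x : list bool) : Prop :=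
  exists s, slp_valid s /\ enc_slp s = x /\ slp_value s = 0%Z.

Definition TwoSoSSLP (x : list bool) : Prop :=
  exists s, slp_valid s /\ enc_slp s = x /\
    exists a b : Z, slp_value s = (a * a + b * b)%Z.

(* ---------- Machine model: multi-stack machines over {0,1} ----------
   (polynomially equivalent to multitape Turing machines).
   Registers are stacks of bits indexed by nat; the head of the list is the top. *)
Inductive instr :=
  | Push (r : nat) (b : bool)
  | Pop (r : nat)                        (* pop stack r (no-op if empty); pc+1 *)
  | Case (r : nat) (le lf lt : nat).     (* jump to le / lf / lt if stack r is
                                            empty / has top false / has top true *)

Definition program := list instr.
Record config := Cfg { pc : nat; regs : nat -> list bool }.

Definition upd (f : nat -> list bool) (r : nat) (v : list bool) : nat -> list bool :=
  fun r' => if Nat.eqb r' r then v else f r'.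

Definition halted (P : program) (c : config) : bool := length P <=? pc c.

Definition step (P : program) (c : config) : config :=
  match nth_error P (pc c) with
  | None => c
  | Some (Push r b) => Cfg (S (pc c)) (upd (regs c) r (b :: regs c r))
  | Some (Pop r) => Cfg (S (pc c)) (upd (regs c) r (tl (regs c r)))
  | Some (Case r le lf lt) =>
      match regs c r with
      | [] => Cfg le (regs c)
      | false :: _ => Cfg lf (regs c)
      | true :: _ => Cfg lt (regs c)
      end
  end.

Definition run (P : program) (n : nat) (c : config) : config := Nat.iter n (step P) c.

Definition init (x : list bool) : config :=
  Cfg 0 (fun r => if Nat.eqb r 0 then x else []).

Definition computes_in_time (P : program) (f : list bool -> list bool)
  (T : nat -> nat) : Prop :=
  forall x, exists t, t <= T (length x) /\
    halted P (run P t (init x)) = true /\ regs (run P t (init x)) 1 = f x.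

Definition poly_time_computable (f : list bool -> list bool) : Prop :=
  exists (P : program) (c d : nat),
    computes_in_time P f (fun n => c * n ^ d + c).

Definition poly_many_one_reducible (L1 L2 : list bool -> Prop) : Prop :=
  exists f, poly_time_computable f /\ forall x, L1 x <-> L2 (f x).

(* Main.v *)
Require Import Defs.
From Stdlib Require Import ZArith NArith List Arith Lia FunctionalExtensionality.
Import ListNotations.

Definition mk (a b c d e : list bool) : nat -> list bool :=
  fun r => match r with 0 => a | 1 => b | 2 => c | 3 => d | 4 => e | _ => [] end.

Lemma upd_mk0 a b c d e v : upd (mk a b c d e) 0 v = mk v b c d e.
Proof. apply functional_extensionality; intros [|[|[|[|[|r]]]]]; reflexivity. Qed.
Lemma upd_mk1 a b c d e v : upd (mk a b c d e) 1 v = mk a v c d e.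
Proof. apply functional_extensionality; intros [|[|[|[|[|r]]]]]; reflexivity. Qed.
Lemma upd_mk2 a b c d e v : upd (mk a b c d e) 2 v = mk a b v d e.
Proof. apply functional_extensionality; intros [|[|[|[|[|r]]]]]; reflexivity. Qed.
Lemma upd_mk3 a b c d e v : upd (mk a b c d e) 3 v = mk a b c v e.
Proof. apply functional_extensionality; intros [|[|[|[|[|r]]]]]; reflexivity. Qed.
Lemma upd_mk4 a b c d e v : upd (mk a b c d e) 4 v = mk a b c d v.
Proof. apply functional_extensionality; intros [|[|[|[|[|r]]]]]; reflexivity. Qed.

Definition exec (ins : instr) (p : nat) (R : nat -> list bool) : config :=
  match ins with
  | Push r b => Cfg (S p) (upd R r (b :: R r))
  | Pop r => Cfg (S p) (upd R r (tl (R r)))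
  | Case r le lf lt =>
      match R r with
      | [] => Cfg le R
      | false :: _ => Cfg lf R
      | true :: _ => Cfg lt R
      end
  end.

Definition J (L : nat) : instr := Case 0 L L L.

Definition code_at (P : program) (a : nat) (l : program) : Prop :=
  forall i ins, nth_error l i = Some ins -> nth_error P (a + i) = Some ins.

Lemma step_code P a l i ins R :
  code_at P a l -> nth_error l i = Some ins ->
  step P (Cfg (a + i) R) = exec ins (a + i) R.
Proof.
  intros Hc Hi. unfold step. cbn [pc regs]. rewrite (Hc _ _ Hi).
  destruct ins; reflexivity.
Qed.

Lemma run_S P n c : run P (S n) c = run P n (step P c).
Proof. unfold run. apply Nat.iter_succ_r. Qed.

Lemma run_add P m n c : run P (m + n) c = run P n (run P m c).
Proof. unfold run. rewrite Nat.add_comm. apply Nat.iter_add. Qed.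

Lemma run_0 P c : run P 0 c = c.
Proof. reflexivity. Qed.

Lemma jmp_same (l : list bool) (X : config) :
  match l with [] => X | false :: _ => X | true :: _ => X end = X.
Proof. destruct l as [|[] ?]; reflexivity. Qed.

Ltac stp Hc :=
  rewrite run_S;
  match goal with
  | |- context [step ?P (Cfg (?a + ?i) ?R)] =>
      erewrite (step_code P a _ i _ R Hc) by reflexivity
  end;
  cbn [exec mk tl J];
  rewrite ?upd_mk0, ?upd_mk1, ?upd_mk2, ?upd_mk3, ?upd_mk4;
  rewrite <- ?Nat.add_succ_r; rewrite ?run_0, ?jmp_same.

Fixpoint incr (c : list bool) : list bool :=
  match c with
  | [] => [true]
  | false :: r => true :: r
  | true :: r => false :: incr r
  end.


Definition inc_code (a x : nat) : program :=
  [ Case 3 (a+7) (a+4) (a+1);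
    Pop 3; Push 4 false; J (a+0);
    Pop 3; Push 3 true; J (a+9);
    Push 3 true; J (a+9);
    Case 4 x (a+10) (a+10);
    Pop 4; Push 3 false; J (a+9) ].

Lemma repeat_swap (b : bool) k (l : list bool) : repeat b k ++ b :: l = b :: repeat b k ++ l.
Proof. induction k; simpl; [reflexivity| rewrite IHk; reflexivity]. Qed.

Lemma inc_loop1 P a x w o b rest k tmp :
  code_at P a (inc_code a x) ->
  run P (4 * k) (Cfg (a+0) (mk w o b (repeat true k ++ rest) tmp))
  = Cfg (a+0) (mk w o b rest (repeat false k ++ tmp)).
Proof.
  intros Hc. revert tmp. induction k as [|k IH]; intros tmp; [reflexivity|].
  replace (4 * S k) with (4 + 4 * k) by lia. rewrite run_add.
  cbn [repeat app].
  stp Hc. stp Hc. stp Hc. stp Hc.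
  rewrite IH. rewrite repeat_swap. reflexivity.
Qed.

Lemma inc_loop2 P a x w o b c k tmp :
  code_at P a (inc_code a x) ->
  run P (4 * k) (Cfg (a+9) (mk w o b c (repeat false k ++ tmp)))
  = Cfg (a+9) (mk w o b (repeat false k ++ c) tmp).
Proof.
  intros Hc. revert c. induction k as [|k IH]; intros c; [reflexivity|].
  replace (4 * S k) with (4 + 4 * k) by lia. rewrite run_add.
  cbn [repeat app].
  stp Hc. stp Hc. stp Hc. stp Hc.
  rewrite IH. rewrite repeat_swap. reflexivity.
Qed.

Lemma decomp_c (c : list bool) : exists k rest, c = repeat true k ++ rest /\
  (rest = [] \/ exists r, rest = false :: r).
Proof.
  induction c as [|[] c IH].
  - exists 0, []. auto.
  - destruct IH as (k & rest & -> & H). exists (S k), rest. auto.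
  - exists 0, (false :: c). eauto.
Qed.

Lemma incr_rep k rest : incr (repeat true k ++ rest) = repeat false k ++ incr rest.
Proof. induction k; simpl; [reflexivity| rewrite IHk; reflexivity]. Qed.

Lemma length_incr c : length (incr c) <= S (length c).
Proof. induction c as [|[] c IH]; simpl; lia. Qed.

Lemma inc_ok P a x w o b c :
  code_at P a (inc_code a x) ->
  exists t, t <= 8 * length c + 6 /\
  run P t (Cfg (a+0) (mk w o b c [])) = Cfg x (mk w o b (incr c) []).
Proof.
  intros Hc. destruct (decomp_c c) as (k & rest & -> & [-> | (r & ->)]).
  - exists (4 * k + (3 + (4 * k + 1))). split.
    { rewrite length_app, repeat_length. lia. }
    rewrite run_add, (inc_loop1 P a x) by exact Hc.
    rewrite run_add. rewrite app_nil_r.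
    stp Hc. stp Hc. stp Hc.
    rewrite run_add.
    replace (repeat false k) with (repeat false k ++ []) at 1 by apply app_nil_r.
    rewrite (inc_loop2 P a x) by exact Hc.
    stp Hc. rewrite incr_rep. reflexivity.
  - exists (4 * k + (4 + (4 * k + 1))). split.
    { rewrite length_app, repeat_length. lia. }
    rewrite run_add, (inc_loop1 P a x) by exact Hc.
    rewrite run_add. rewrite app_nil_r.
    stp Hc. stp Hc. stp Hc. stp Hc.
    rewrite run_add.
    replace (repeat false k) with (repeat false k ++ []) at 1 by apply app_nil_r.
    rewrite (inc_loop2 P a x) by exact Hc.
    stp Hc. rewrite incr_rep. reflexivity.
Qed.

Definition dbl (l : list bool) : list bool := flat_map (fun b => [b; b]) l.
Definition emitc (c : list bool) : list bool := dbl (rev c) ++ [false; true].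

Definition emit_code (a x : nat) : program :=
  [ Case 3 (a+7) (a+1) (a+4);
    Pop 3; Push 4 false; J (a+0);
    Pop 3; Push 4 true; J (a+0);
    Case 4 (a+18) (a+8) (a+13);
    Pop 4; Push 3 false; Push 2 false; Push 2 false; J (a+7);
    Pop 4; Push 3 true; Push 2 true; Push 2 true; J (a+7);
    Push 2 false; Push 2 true; J x ].

Lemma emit_loop1 P a x w o b l tmp :
  code_at P a (emit_code a x) ->
  run P (4 * length l) (Cfg (a+0) (mk w o b l tmp))
  = Cfg (a+0) (mk w o b [] (rev l ++ tmp)).
Proof.
  intros Hc. revert tmp. induction l as [|e l IH]; intros tmp; [reflexivity|].
  replace (4 * length (e :: l)) with (4 + 4 * length l) by (simpl; lia). rewrite run_add.
  destruct e; stp Hc; stp Hc; stp Hc; stp Hc; rewrite IH; simpl; rewrite <- app_assoc; reflexivity.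
Qed.

Lemma emit_loop2 P a x w o b c l :
  code_at P a (emit_code a x) ->
  run P (6 * length l) (Cfg (a+7) (mk w o b c l))
  = Cfg (a+7) (mk w o (rev (dbl l) ++ b) (rev l ++ c) []).
Proof.
  intros Hc. revert b c. induction l as [|e l IH]; intros b c; [reflexivity|].
  replace (6 * length (e :: l)) with (6 + 6 * length l) by (simpl; lia). rewrite run_add.
  destruct e; stp Hc; stp Hc; stp Hc; stp Hc; stp Hc; stp Hc; rewrite IH; simpl;
    rewrite <- !app_assoc; reflexivity.
Qed.

Lemma emit_ok P a x w o b c :
  code_at P a (emit_code a x) ->
  exists t, t <= 10 * length c + 5 /\
  run P t (Cfg (a+0) (mk w o b c [])) = Cfg x (mk w o (rev (emitc c) ++ b) c []).
Proof.
  intros Hc. exists (4 * length c + (1 + (6 * length (rev c) + 4))). split.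
  { rewrite length_rev. lia. }
  rewrite run_add, (emit_loop1 P a x) by exact Hc.
  rewrite run_add. rewrite app_nil_r. stp Hc.
  rewrite run_add, (emit_loop2 P a x) by exact Hc.
  stp Hc. stp Hc. stp Hc. stp Hc. rewrite rev_involutive, app_nil_r.
  unfold emitc. rewrite rev_app_distr. reflexivity.
Qed.

Definition pour_code (a x : nat) : program :=
  [ Case 2 x (a+1) (a+4);
    Pop 2; Push 1 false; J (a+0);
    Pop 2; Push 1 true; J (a+0) ].

Lemma pour_loop P a x w o l c t :
  code_at P a (pour_code a x) ->
  run P (4 * length l) (Cfg (a+0) (mk w o l c t))
  = Cfg (a+0) (mk w (rev l ++ o) [] c t).
Proof.
  intros Hc. revert o. induction l as [|e l IH]; intros o; [reflexivity|].
  replace (4 * length (e :: l)) with (4 + 4 * length l) by (simpl; lia). rewrite run_add.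
  destruct e; stp Hc; stp Hc; stp Hc; stp Hc; rewrite IH; simpl; rewrite <- app_assoc; reflexivity.
Qed.

Lemma pour_ok P a x w o l c t :
  code_at P a (pour_code a x) ->
  run P (4 * length l + 1) (Cfg (a+0) (mk w o l c t))
  = Cfg x (mk w (rev l ++ o) [] c t).
Proof.
  intros Hc. rewrite run_add, (pour_loop P a x) by exact Hc. stp Hc. reflexivity.
Qed.

Inductive st := S0 | A0 | A1 | NS (k : bool) | NS0 (k : bool) | NS1 (k : bool)
  | NB (k : bool) | NB0 (k : bool) | NB1 (k : bool).
Inductive res := Go (s : st) | Inc | Err.

Definition fin (k : bool) : res := if k then Inc else Go (NS true).

Definition trans (s : st) (b : bool) : res :=
  match s, b with
  | S0, false => Go A0 | S0, true => Go A1
  | A0, _ => Go (NS false)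
  | A1, false => Go (NS false) | A1, true => Err
  | NS k, false => Go (NS0 k) | NS k, true => Go (NS1 k)
  | NS0 k, false => Err | NS0 k, true => fin k
  | NS1 k, false => Err | NS1 k, true => Go (NB k)
  | NB k, false => Go (NB0 k) | NB k, true => Go (NB1 k)
  | NB0 k, false => Go (NB k) | NB0 k, true => fin k
  | NB1 k, false => Err | NB1 k, true => Go (NB k)
  end.

Fixpoint dfa (s : st) (w : list bool) (c : list bool) : option (list bool) :=
  match w with
  | [] => match s with S0 => Some c | _ => None end
  | b :: w' =>
      match trans s b with
      | Go s' => dfa s' w' c
      | Inc => dfa S0 w' (incr c)
      | Err => None
      end
  end.
Definition INC0 := 84. Definition ERRL := 97. Definition FIN := 100. Definition HALT := 227.
Definition lab (s : st) : nat := match s with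
  | S0 => 0
  | A0 => 7
  | A1 => 14
  | NS false => 18
  | NS0 false => 25
  | NS1 false => 29
  | NB false => 33
  | NB0 false => 40
  | NB1 false => 47
  | NS true => 51
  | NS0 true => 58
  | NS1 true => 62
  | NB true => 66
  | NB0 true => 73
  | NB1 true => 80
  end.
Definition P : program := [
  Case 0 100 1 4;
  Pop 0;
  Push 2 false;
  Case 0 7 7 7;
  Pop 0;
  Push 2 true;
  Case 0 14 14 14;
  Case 0 97 8 11;
  Pop 0;
  Push 2 false;
  Case 0 18 18 18;
  Pop 0;
  Push 2 true;
  Case 0 18 18 18;
  Case 0 97 15 97;
  Pop 0;
  Push 2 false;
  Case 0 18 18 18;
  Case 0 97 19 22;
  Pop 0;
  Push 2 false;
  Case 0 25 25 25;
  Pop 0;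
  Push 2 true;
  Case 0 29 29 29;
  Case 0 97 97 26;
  Pop 0;
  Push 2 true;
  Case 0 51 51 51;
  Case 0 97 97 30;
  Pop 0;
  Push 2 true;
  Case 0 33 33 33;
  Case 0 97 34 37;
  Pop 0;
  Push 2 false;
  Case 0 40 40 40;
  Pop 0;
  Push 2 true;
  Case 0 47 47 47;
  Case 0 97 41 44;
  Pop 0;
  Push 2 false;
  Case 0 33 33 33;
  Pop 0;
  Push 2 true;
  Case 0 51 51 51;
  Case 0 97 97 48;
  Pop 0;
  Push 2 true;
  Case 0 33 33 33;
  Case 0 97 52 55;
  Pop 0;
  Push 2 false;
  Case 0 58 58 58;
  Pop 0;
  Push 2 true;
  Case 0 62 62 62;
  Case 0 97 97 59;
  Pop 0;
  Push 2 true;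
  Case 0 84 84 84;
  Case 0 97 97 63;
  Pop 0;
  Push 2 true;
  Case 0 66 66 66;
  Case 0 97 67 70;
  Pop 0;
  Push 2 false;
  Case 0 73 73 73;
  Pop 0;
  Push 2 true;
  Case 0 80 80 80;
  Case 0 97 74 77;
  Pop 0;
  Push 2 false;
  Case 0 66 66 66;
  Pop 0;
  Push 2 true;
  Case 0 84 84 84;
  Case 0 97 97 81;
  Pop 0;
  Push 2 true;
  Case 0 66 66 66]
  ++ inc_code 84 0
  ++ [Push 1 true; Push 1 true; Case 0 227 227 227]
  ++ [Push 2 true; Push 2 false]
  ++ emit_code 102 123 ++ emit_code 123 144 ++ inc_code 144 157
  ++ [Push 2 false; Push 2 false] ++ emit_code 159 180
  ++ [Push 2 false; Push 2 true] ++ inc_code 182 195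
  ++ [Push 2 false; Push 2 true; Push 2 false; Push 2 true] ++ emit_code 199 220 ++ pour_code 220 227.

Lemma step_at P p ins R : nth_error P p = Some ins -> step P (Cfg p R) = exec ins p R.
Proof. intros H. unfold step. cbn [pc regs]. rewrite H. destruct ins; reflexivity. Qed.

Ltac stpc :=
  rewrite run_S;
  match goal with
  | |- context [step ?P (Cfg ?p ?R)] =>
      erewrite (step_at P p _ R) by reflexivity
  end;
  cbn [exec mk tl J];
  rewrite ?upd_mk0, ?upd_mk1, ?upd_mk2, ?upd_mk3, ?upd_mk4;
  rewrite ?run_0, ?jmp_same.

Lemma dfa_go s b s' w buf c : trans s b = Go s' ->
  run P 4 (Cfg (lab s) (mk (b::w) [] buf c [])) = Cfg (lab s') (mk w [] (b::buf) c []).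
Proof.
  intros H; destruct s; try destruct k; destruct b; simpl in H; try discriminate;
    injection H as <-; cbn [lab]; stpc; stpc; stpc; stpc; reflexivity.
Qed.

Lemma dfa_inc s b w buf c : trans s b = Inc ->
  run P 4 (Cfg (lab s) (mk (b::w) [] buf c [])) = Cfg INC0 (mk w [] (b::buf) c []).
Proof.
  intros H; destruct s; try destruct k; destruct b; simpl in H; try discriminate;
    cbn [lab]; stpc; stpc; stpc; stpc; reflexivity.
Qed.

Lemma dfa_err s b w buf c : trans s b = Err ->
  run P 4 (Cfg (lab s) (mk (b::w) [] buf c [])) = Cfg HALT (mk (b::w) [true;true] buf c []).
Proof.
  intros H; destruct s; try destruct k; destruct b; simpl in H; try discriminate;
    cbn [lab]; stpc; stpc; stpc; stpc; reflexivity.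
Qed.

Lemma dfa_nil_S0 buf c :
  run P 1 (Cfg (lab S0) (mk [] [] buf c [])) = Cfg FIN (mk [] [] buf c []).
Proof. cbn [lab]. stpc. reflexivity. Qed.

Lemma dfa_nil_other s buf c : s <> S0 ->
  run P 4 (Cfg (lab s) (mk [] [] buf c [])) = Cfg HALT (mk [] [true;true] buf c []).
Proof.
  intros H; destruct s; try destruct k; try (exfalso; apply H; reflexivity);
    cbn [lab]; stpc; stpc; stpc; stpc; reflexivity.
Qed.

Ltac code_at_tac :=
  let i := fresh "i" in let ins := fresh "ins" in let H := fresh "H" in
  intros i ins H;
  repeat (destruct i as [|i]; [simpl in H; injection H as <-; reflexivity|]);
  simpl in H; destruct i; discriminate.

Lemma code_INC0 : code_at P 84 (inc_code 84 0).
Proof. code_at_tac. Qed.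
Lemma code_E1 : code_at P 102 (emit_code 102 123).
Proof. code_at_tac. Qed.
Lemma code_E2 : code_at P 123 (emit_code 123 144).
Proof. code_at_tac. Qed.
Lemma code_I1 : code_at P 144 (inc_code 144 157).
Proof. code_at_tac. Qed.
Lemma code_E3 : code_at P 159 (emit_code 159 180).
Proof. code_at_tac. Qed.
Lemma code_I2 : code_at P 182 (inc_code 182 195).
Proof. code_at_tac. Qed.
Lemma code_E4 : code_at P 199 (emit_code 199 220).
Proof. code_at_tac. Qed.
Lemma code_PO : code_at P 220 (pour_code 220 227).
Proof. code_at_tac. Qed.
Lemma length_P : length P = HALT.
Proof. reflexivity. Qed.

Lemma st_dec (s : st) : {s = S0} + {s <> S0}.
Proof. destruct s; [left; reflexivity| right; discriminate ..]. Qed.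

Definition bnd n lc := n * (8 * (lc + n) + 20) + 5.

Lemma parse_ok w : forall s buf c,
  match dfa s w c with
  | Some c' => exists t, t <= bnd (length w) (length c) /\ length c' <= length c + length w /\
      run P t (Cfg (lab s) (mk w [] buf c [])) = Cfg FIN (mk [] [] (rev w ++ buf) c' [])
  | None => exists t R, t <= bnd (length w) (length c) /\
      run P t (Cfg (lab s) (mk w [] buf c [])) = Cfg HALT R /\ R 1 = [true;true]
  end.
Proof.
  induction w as [|b w IH]; intros s buf c.
  - destruct (st_dec s) as [-> | Hs].
    + simpl. exists 1. split; [unfold bnd; lia|]. split; [lia|]. apply dfa_nil_S0.
    + replace (dfa s [] c) with (@None (list bool)) by (destruct s; try reflexivity; congruence).
      exists 4, (mk [] [true;true] buf c []). split; [unfold bnd; simpl; lia|].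
      split; [apply dfa_nil_other; exact Hs | reflexivity].
  - cbn [dfa]. destruct (trans s b) eqn:E.
    + specialize (IH s0 (b :: buf) c). destruct (dfa s0 w c) as [c'|].
      * destruct IH as (t & Ht & Hl & Hr). exists (4 + t).
        split; [unfold bnd in *; cbn [length]; nia|]. split; [cbn [length]; lia|].
        rewrite run_add, (dfa_go s b s0) by exact E. rewrite Hr. cbn [rev]. rewrite <- app_assoc. reflexivity.
      * destruct IH as (t & R & Ht & Hr & HR). exists (4 + t), R.
        split; [unfold bnd in *; cbn [length]; nia|].
        rewrite run_add, (dfa_go s b s0) by exact E. split; [exact Hr | exact HR].
    + destruct (inc_ok P 84 0 w [] (b :: buf) c code_INC0) as (t1 & Ht1 & E1).
      replace (84 + 0) with INC0 in E1 by reflexivity.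
      specialize (IH S0 (b :: buf) (incr c)). pose proof (length_incr c) as Li.
      destruct (dfa S0 w (incr c)) as [c'|].
      * destruct IH as (t & Ht & Hl & Hr). exists (4 + t1 + t).
        split; [unfold bnd in *; cbn [length]; nia|]. split; [cbn [length]; lia|].
        rewrite !run_add, dfa_inc by exact E. rewrite E1. cbn [lab] in Hr. rewrite Hr.
        cbn [rev]. rewrite <- app_assoc. reflexivity.
      * destruct IH as (t & R & Ht & Hr & HR). exists (4 + t1 + t), R.
        split; [unfold bnd in *; cbn [length]; nia|].
        rewrite !run_add, dfa_inc by exact E. rewrite E1. cbn [lab] in Hr. split; [exact Hr | exact HR].
    + exists 4, (mk (b :: w) [true;true] buf c []). split; [unfold bnd; cbn [length]; nia|].
      split; [apply dfa_err; exact E | reflexivity].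
Qed.

Definition suffix (c : list bool) : list bool :=
  [true;false] ++ emitc c ++ emitc c ++ [false;false] ++ emitc (incr c) ++ [false;true]
  ++ [false;true;false;true] ++ emitc (incr (incr c)).

Lemma length_dbl l : length (dbl l) = 2 * length l.
Proof. induction l as [|e l IH]; [reflexivity|]. change (dbl (e :: l)) with (e :: e :: dbl l).
  cbn [length]. rewrite IH. lia. Qed.

Lemma length_emitc c : length (emitc c) = 2 * length c + 2.
Proof.
  unfold emitc. rewrite length_app, length_dbl, length_rev. simpl. lia.
Qed.

Lemma fin_ok buf c : exists t, t <= 4 * length buf + 100 * length c + 300 /\
  run P t (Cfg FIN (mk [] [] buf c [])) = Cfg HALT (mk [] (rev buf ++ suffix c) [] (incr (incr c)) []).
Proof.
  set (b0 := false :: true :: buf).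
  assert (E0 : run P 2 (Cfg FIN (mk [] [] buf c [])) = Cfg (102+0) (mk [] [] b0 c [])).
  { unfold FIN. stpc. stpc. reflexivity. }
  destruct (emit_ok P 102 123 [] [] b0 c code_E1) as (t1 & Ht1 & E1).
  set (b1 := rev (emitc c) ++ b0) in E1.
  destruct (emit_ok P 123 144 [] [] b1 c code_E2) as (t2 & Ht2 & E2).
  set (b2 := rev (emitc c) ++ b1) in E2.
  destruct (inc_ok P 144 157 [] [] b2 c code_I1) as (t3 & Ht3 & E3).
  set (b3 := false :: false :: b2).
  assert (E4 : run P 2 (Cfg 157 (mk [] [] b2 (incr c) [])) = Cfg (159+0) (mk [] [] b3 (incr c) [])).
  { stpc. stpc. reflexivity. }
  destruct (emit_ok P 159 180 [] [] b3 (incr c) code_E3) as (t5 & Ht5 & E5).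
  set (b5 := rev (emitc (incr c)) ++ b3) in E5.
  set (b6 := true :: false :: b5).
  assert (E6 : run P 2 (Cfg 180 (mk [] [] b5 (incr c) [])) = Cfg (182+0) (mk [] [] b6 (incr c) [])).
  { stpc. stpc. reflexivity. }
  destruct (inc_ok P 182 195 [] [] b6 (incr c) code_I2) as (t7 & Ht7 & E7).
  set (b8 := true :: false :: true :: false :: b6).
  assert (E8 : run P 4 (Cfg 195 (mk [] [] b6 (incr (incr c)) [])) = Cfg (199+0) (mk [] [] b8 (incr (incr c)) [])).
  { stpc. stpc. stpc. stpc. reflexivity. }
  destruct (emit_ok P 199 220 [] [] b8 (incr (incr c)) code_E4) as (t9 & Ht9 & E9).
  set (b9 := rev (emitc (incr (incr c))) ++ b8) in E9.
  pose proof (pour_ok P 220 227 [] [] b9 (incr (incr c)) [] code_PO) as E10.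
  exists (2 + t1 + t2 + t3 + 2 + t5 + 2 + t7 + 4 + t9 + (4 * length b9 + 1)).
  assert (Hb9 : rev b9 = rev buf ++ suffix c).
  { unfold b9, b8, b6, b5, b3, b2, b1, b0, suffix.
    repeat progress (rewrite ?rev_app_distr, ?rev_involutive; cbn [rev app]).
    rewrite <- !app_assoc. cbn [app]. reflexivity. }
  split.
  - assert (L : length b9 = length buf + length (suffix c)).
    { rewrite <- (length_rev b9), Hb9, length_app, length_rev. reflexivity. }
    rewrite L. unfold suffix. rewrite !length_app, !length_emitc. cbn [length].
    pose proof (length_incr c). pose proof (length_incr (incr c)). lia.
  - rewrite ?Nat.add_0_r in E0, E1, E2, E3, E4, E5, E6, E7, E8, E9, E10.
    set (tl9 := 4 * length b9 + 1) in *.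
    rewrite !run_add. rewrite E0, E1, E2, E3, E4, E5, E6, E7, E8, E9, E10.
    rewrite app_nil_r, Hb9. reflexivity.
Qed.

Definition cnt (m : nat) : list bool := Nat.iter m incr [].

Fixpoint lsb (p : positive) : list bool :=
  match p with xH => [true] | xO q => false :: lsb q | xI q => true :: lsb q end.

Lemma lsb_rev p : lsb p = rev (enc_pos p).
Proof. induction p; simpl; rewrite ?rev_app_distr; simpl; rewrite ?IHp; reflexivity. Qed.

Lemma lsb_succ p : lsb (Pos.succ p) = incr (lsb p).
Proof. induction p; simpl; rewrite ?IHp; reflexivity. Qed.

Lemma cnt_S m : cnt (S m) = lsb (Pos.of_succ_nat m).
Proof.
  induction m as [|m IH]; [reflexivity|].
  change (cnt (S (S m))) with (incr (cnt (S m))). rewrite IH.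
  simpl. rewrite lsb_succ. reflexivity.
Qed.

Lemma rev_cnt m : rev (cnt m) = enc_nat m.
Proof.
  destruct m as [|m]; [reflexivity|]. rewrite cnt_S, lsb_rev, rev_involutive. reflexivity.
Qed.

Lemma emitc_cnt m : emitc (cnt m) = enc_nat_sd m.
Proof. unfold emitc, enc_nat_sd. rewrite rev_cnt. reflexivity. Qed.

Lemma enc_pos_shape p : exists l, enc_pos p = true :: l.
Proof. induction p; simpl; try (destruct IHp as [l ->]); eexists; reflexivity. Qed.

Lemma enc_nat_shape n : enc_nat n = [] \/ exists l, enc_nat n = true :: l.
Proof.
  unfold enc_nat. destruct (N.of_nat n); [left; reflexivity| right; apply enc_pos_shape].
Qed.

Fixpoint pos_of_bits (acc : positive) (l : list bool) : positive :=
  match l with [] => acc | b :: l' => pos_of_bits (if b then xI acc else xO acc) l' end.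

Lemma enc_pos_of_bits l : forall acc, enc_pos (pos_of_bits acc l) = enc_pos acc ++ l.
Proof.
  induction l as [|b l IH]; intros acc; simpl; [rewrite app_nil_r; reflexivity|].
  rewrite IH. destruct b; simpl; rewrite <- app_assoc; reflexivity.
Qed.

Lemma bits_nat l : exists n, enc_nat (S n) = true :: l.
Proof.
  exists (Nat.pred (Pos.to_nat (pos_of_bits xH l))).
  rewrite Nat.succ_pred_pos by apply Pos2Nat.is_pos.
  unfold enc_nat. rewrite positive_nat_N. apply enc_pos_of_bits.
Qed.

Definition done (k : bool) (w c : list bool) : option (list bool) :=
  if k then dfa S0 w (incr c) else dfa (NS true) w c.

Lemma dfa_NB k l w c : dfa (NB k) (dbl l ++ [false; true] ++ w) c = done k w c.
Proof.
  induction l as [|[] l IH].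
  - destruct k; reflexivity.
  - exact IH.
  - exact IH.
Qed.

Lemma dfa_NS k n w c : dfa (NS k) (enc_nat_sd n ++ w) c = done k w c.
Proof.
  unfold enc_nat_sd. fold (dbl (enc_nat n)).
  destruct (enc_nat_shape n) as [-> | [l ->]].
  - destruct k; reflexivity.
  - change (dbl (true :: l)) with (true :: true :: dbl l). rewrite <- app_assoc.
    cbn [app]. apply dfa_NB.
Qed.

Lemma dfa_instr i w c : dfa S0 (enc_instr i ++ w) c = dfa S0 w (incr c).
Proof.
  destruct i as [[o j] k]. unfold enc_instr. rewrite <- !app_assoc.
  assert (E : dfa S0 (enc_op o ++ enc_nat_sd j ++ enc_nat_sd k ++ w) c
              = dfa (NS false) (enc_nat_sd j ++ enc_nat_sd k ++ w) c)
    by (destruct o; reflexivity).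
  rewrite E, dfa_NS. unfold done. rewrite dfa_NS. reflexivity.
Qed.

Lemma dfa_enc s w c : dfa S0 (enc_slp s ++ w) c = dfa S0 w (Nat.iter (length s) incr c).
Proof.
  revert c. induction s as [|i s IH]; intros c; [reflexivity|].
  unfold enc_slp. cbn [flat_map]. fold (enc_slp s). rewrite <- app_assoc, dfa_instr, IH.
  cbn [length]. rewrite Nat.iter_succ_r. reflexivity.
Qed.

Lemma dfa_NB_sound n : forall k w c r, length w <= n -> dfa (NB k) w c = Some r ->
  exists l w', w = dbl l ++ [false; true] ++ w' /\ done k w' c = Some r.
Proof.
  induction n as [|n IH]; intros k w c r Hl H.
  - destruct w; [discriminate|simpl in Hl; lia].
  - destruct w as [|[] [|[] w]]; try discriminate.
    + simpl in H. destruct (IH k w c r) as (l & w' & -> & Hd); [simpl in Hl; lia| exact H|].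
      exists (true :: l), w'. split; [reflexivity | exact Hd].
    + simpl in H. exists [], w. split; [reflexivity|]. destruct k; exact H.
    + simpl in H. destruct (IH k w c r) as (l & w' & -> & Hd); [simpl in Hl; lia| exact H|].
      exists (false :: l), w'. split; [reflexivity | exact Hd].
Qed.

Lemma dfa_NS_sound k w c r : dfa (NS k) w c = Some r ->
  exists n w', w = enc_nat_sd n ++ w' /\ done k w' c = Some r.
Proof.
  intros H. destruct w as [|[] [|[] w]]; try discriminate.
  - simpl in H. destruct (dfa_NB_sound (length w) k w c r (le_n _) H) as (l & w' & -> & Hd).
    destruct (bits_nat l) as [n Hn]. exists (S n), w'. split; [|exact Hd].
    unfold enc_nat_sd. rewrite Hn. cbn [flat_map app]. fold (dbl l). rewrite <- app_assoc. reflexivity.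
  - simpl in H. exists 0, w. split; [reflexivity|]. destruct k; exact H.
Qed.

Lemma length_sd n w : length w <= length (enc_nat_sd n ++ w) - 2.
Proof. unfold enc_nat_sd. rewrite !length_app. cbn [length]. lia. Qed.

Lemma dfa_S0_sound n : forall w c r, length w <= n -> dfa S0 w c = Some r ->
  exists s, enc_slp s = w /\ r = Nat.iter (length s) incr c.
Proof.
  induction n as [|n IH]; intros w c r Hl H.
  - destruct w; [|simpl in Hl; lia]. simpl in H. injection H as <-. exists []. auto.
  - destruct w as [|b1 [|b2 w1]].
    + simpl in H. injection H as <-. exists []. auto.
    + destruct b1; discriminate.
    + assert (Hop : exists o, enc_op o = [b1; b2] /\ dfa (NS false) w1 c = Some r).
      { destruct b1, b2; simpl in H; try discriminate.
        - exists OMul. auto. - exists OSub. auto. - exists OAdd. auto. }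
      destruct Hop as (o & Ho & H1).
      destruct (dfa_NS_sound _ _ _ _ H1) as (n1 & w2 & -> & H2). simpl in H2.
      destruct (dfa_NS_sound _ _ _ _ H2) as (n2 & w3 & -> & H3). simpl in H3.
      destruct (IH w3 (incr c) r) as (s & Hs & Hr); [|exact H3|].
      { pose proof (length_sd n1 (enc_nat_sd n2 ++ w3)). pose proof (length_sd n2 w3).
        simpl in Hl. lia. }
      exists ((o, n1, n2) :: s). split.
      * unfold enc_slp. cbn [flat_map]. fold (enc_slp s). rewrite Hs.
        unfold enc_instr. rewrite Ho. rewrite <- !app_assoc. reflexivity.
      * rewrite Hr. cbn [length]. rewrite Nat.iter_succ_r. reflexivity.
Qed.

Lemma enc_pos_nonnil p : enc_pos p <> [].
Proof. destruct (enc_pos_shape p) as [l ->]. discriminate. Qed.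

Lemma enc_pos_inj p q : enc_pos p = enc_pos q -> p = q.
Proof.
  revert q. induction p as [p IH|p IH|]; intros q H; destruct q as [q|q|]; simpl in H;
    try reflexivity;
    try (change [true] with ([] ++ [true]) in H);
    apply app_inj_tail in H; destruct H as [H1 H2];
    first [ discriminate
          | f_equal; apply IH; exact H1
          | exfalso; apply (enc_pos_nonnil p); exact H1
          | exfalso; apply (enc_pos_nonnil q); symmetry; exact H1 ].
Qed.

Lemma enc_nat_inj n m : enc_nat n = enc_nat m -> n = m.
Proof.
  unfold enc_nat. intros H. apply Nat2N.inj.
  destruct (N.of_nat n) as [|p], (N.of_nat m) as [|q]; auto.
  - exfalso. apply (enc_pos_nonnil q). symmetry. exact H.
  - exfalso. apply (enc_pos_nonnil p). exact H.
  - f_equal. apply enc_pos_inj. exact H.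
Qed.

Lemma dbl_inj l1 l2 r1 r2 : dbl l1 ++ [false; true] ++ r1 = dbl l2 ++ [false; true] ++ r2 ->
  l1 = l2 /\ r1 = r2.
Proof.
  revert l2. induction l1 as [|e1 l1 IH]; intros [|e2 l2] H.
  - simpl in H. injection H. auto.
  - exfalso. change (dbl (e2 :: l2)) with (e2 :: e2 :: dbl l2) in H. simpl in H.
    inversion H; subst; discriminate.
  - exfalso. change (dbl (e1 :: l1)) with (e1 :: e1 :: dbl l1) in H. simpl in H.
    inversion H; subst; discriminate.
  - change (dbl (e1 :: l1)) with (e1 :: e1 :: dbl l1) in H.
    change (dbl (e2 :: l2)) with (e2 :: e2 :: dbl l2) in H. simpl in H.
    injection H as -> _ H. destruct (IH l2 H) as [-> ->]. auto.
Qed.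

Lemma sd_inj n1 n2 r1 r2 : enc_nat_sd n1 ++ r1 = enc_nat_sd n2 ++ r2 -> n1 = n2 /\ r1 = r2.
Proof.
  unfold enc_nat_sd. fold (dbl (enc_nat n1)) (dbl (enc_nat n2)). rewrite <- !app_assoc.
  intros H. apply dbl_inj in H. destruct H as [H1 H2]. split; [apply enc_nat_inj|]; auto.
Qed.

Lemma op_inj o1 o2 r1 r2 : enc_op o1 ++ r1 = enc_op o2 ++ r2 -> o1 = o2 /\ r1 = r2.
Proof. destruct o1, o2; simpl; intros H; injection H; auto; discriminate. Qed.

Lemma instr_inj i1 i2 r1 r2 : enc_instr i1 ++ r1 = enc_instr i2 ++ r2 -> i1 = i2 /\ r1 = r2.
Proof.
  destruct i1 as [[o1 j1] k1], i2 as [[o2 j2] k2]. unfold enc_instr. rewrite <- !app_assoc.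
  intros H. apply op_inj in H. destruct H as [-> H]. apply sd_inj in H. destruct H as [-> H].
  apply sd_inj in H. destruct H as [-> ->]. auto.
Qed.

Lemma enc_slp_cons i s : enc_slp (i :: s) = enc_instr i ++ enc_slp s.
Proof. reflexivity. Qed.

Lemma enc_instr_nonnil i : enc_instr i <> [].
Proof. destruct i as [[[] j] k]; discriminate. Qed.

Lemma enc_slp_inj s1 s2 : enc_slp s1 = enc_slp s2 -> s1 = s2.
Proof.
  revert s2. induction s1 as [|i1 s1 IH]; intros [|i2 s2] H; auto.
  - exfalso. rewrite enc_slp_cons in H. destruct (enc_instr i2) eqn:E; [|discriminate].
    exact (enc_instr_nonnil _ E).
  - exfalso. rewrite enc_slp_cons in H. destruct (enc_instr i1) eqn:E; [|discriminate].
    exact (enc_instr_nonnil _ E).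
  - rewrite !enc_slp_cons in H. apply instr_inj in H. destruct H as [-> H]. f_equal. auto.
Qed.

Lemma enc_slp_app s t : enc_slp (s ++ t) = enc_slp s ++ enc_slp t.
Proof. unfold enc_slp. apply flat_map_app. Qed.

Definition suf (m : nat) : slp := [(OMul, m, m); (OAdd, S m, 0); (OSub, 0, S (S m))].

Lemma enc_suf m : enc_slp (suf m) = suffix (cnt m).
Proof.
  unfold suffix. rewrite !emitc_cnt.
  change (incr (cnt m)) with (cnt (S m)). change (incr (cnt (S m))) with (cnt (S (S m))).
  rewrite !emitc_cnt. unfold suf, enc_slp. cbn [flat_map]. unfold enc_instr.
  change (enc_nat_sd 0) with [false; true]. cbn [enc_op].
  rewrite ?app_nil_r. rewrite <- !app_assoc. cbn [app]. reflexivity.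
Qed.

Lemma valid_app s u : forall t, valid_from t (s ++ u) <-> valid_from t s /\ valid_from (t + length s) u.
Proof.
  induction s as [|[[o j] k] s IH]; intros t; simpl.
  - rewrite Nat.add_0_r. tauto.
  - rewrite IH. replace (S t + length s) with (t + S (length s)) by lia. tauto.
Qed.

Lemma valid_suf m : valid_from m (suf m).
Proof. simpl. lia. Qed.

Lemma vals_app acc s t : slp_vals_aux acc (s ++ t) = slp_vals_aux (slp_vals_aux acc s) t.
Proof.
  revert acc. induction s as [|[[o j] k] s IH]; intros acc; simpl; auto.
Qed.

Lemma vals_prefix s : forall acc, exists l, slp_vals_aux acc s = acc ++ l /\ length l = length s.
Proof.
  induction s as [|[[o j] k] s IH]; intros acc; simpl.
  - exists []. rewrite app_nil_r. auto.
  - destruct (IH (acc ++ [apply_op o (nth j acc 0%Z) (nth k acc 0%Z)])) as (l & E & L).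
    rewrite E. eexists. rewrite <- app_assoc. split; [reflexivity|]. simpl. lia.
Qed.

Lemma last_nth (V : list Z) m d : length V = S m -> last V d = nth m V d.
Proof.
  revert m. induction V as [|v V IH]; intros m H; [discriminate|].
  destruct V as [|v' V]; simpl in H.
  - assert (m = 0) by lia. subst. reflexivity.
  - destruct m as [|m]; [simpl in H; lia|]. change (last (v :: v' :: V) d) with (last (v' :: V) d).
    rewrite (IH m) by (simpl; lia). reflexivity.
Qed.

Lemma value_suf s : slp_value (s ++ suf (length s)) = (- (slp_value s * slp_value s))%Z.
Proof.
  unfold slp_value, slp_vals. rewrite vals_app.
  destruct (vals_prefix s [1%Z]) as (l & E & L). rewrite E.
  set (m := length s) in *. set (V := [1%Z] ++ l).
  assert (LV : length V = S m) by (unfold V; simpl; lia).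
  assert (HN : nth m V 0%Z = last V 1%Z) by (rewrite (last_nth V m) by exact LV; apply nth_indep; lia).
  set (N := last V 1%Z) in *.
  unfold suf. cbn [slp_vals_aux]. rewrite HN.
  assert (H0 : forall t, nth 0 (V ++ t) 0%Z = 1%Z) by reflexivity.
  rewrite H0.
  rewrite app_nth2 by lia. rewrite LV, Nat.sub_diag. cbn [nth].
  rewrite last_last.
  rewrite <- (app_assoc V), H0.
  rewrite app_nth2 by lia. rewrite LV. replace (S (S m) - S m) with 1 by lia. cbn [nth app].
  cbn [apply_op]. lia.
Qed.

Definition red (x : list bool) : list bool :=
  match dfa S0 x [] with Some c => x ++ suffix c | None => [true; true] end.

Lemma red_correct x : EquSLP x <-> TwoSoSSLP (red x).
Proof.
  unfold EquSLP, TwoSoSSLP, red. split.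
  - intros (s & Hv & He & Hz). subst x.
    rewrite <- (app_nil_r (enc_slp s)), dfa_enc. cbn [dfa]. rewrite app_nil_r.
    exists (s ++ suf (length s)). split; [|split].
    + unfold slp_valid. apply valid_app. split; [exact Hv|]. apply valid_suf.
    + rewrite enc_slp_app, enc_suf. reflexivity.
    + exists 0%Z, 0%Z. rewrite value_suf, Hz. reflexivity.
  - destruct (dfa S0 x []) as [c|] eqn:Ed.
    + intros (s' & Hv & He & a & b & Hab).
      destruct (dfa_S0_sound (length x) x [] c (le_n _) Ed) as (s & Hs & Hc).
      subst x c. fold (cnt (length s)) in He. rewrite <- enc_suf, <- enc_slp_app in He.
      apply enc_slp_inj in He. subst s'.
      unfold slp_valid in Hv. apply valid_app in Hv. destruct Hv as [Hv _].
      exists s. split; [exact Hv|]. split; [reflexivity|].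
      rewrite value_suf in Hab. nia.
    + intros (s' & _ & He & _). exfalso.
      destruct s' as [|[[o j] k] s']; [discriminate|].
      rewrite enc_slp_cons in He. unfold enc_instr in He.
      destruct o; simpl in He; inversion He.
Qed.

Lemma init_mk x : init x = Cfg 0 (mk x [] [] [] []).
Proof.
  unfold init. f_equal. apply functional_extensionality. intros [|[|[|[|[|r]]]]]; reflexivity.
Qed.

Lemma red_time : computes_in_time P red (fun n => 1000 * n ^ 2 + 1000).
Proof.
  intros x. rewrite init_mk. pose proof (parse_ok x S0 [] []) as Hp.
  unfold red. destruct (dfa S0 x []) as [c|].
  - destruct Hp as (t1 & Ht1 & Hl & E1). destruct (fin_ok (rev x ++ []) c) as (t2 & Ht2 & E2).
    exists (t1 + t2). rewrite run_add. cbn [lab] in E1. rewrite E1, E2.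
    split; [|split].
    + unfold bnd in Ht1. rewrite length_app, length_rev in Ht2. simpl in Ht1, Hl, Ht2.
      rewrite Nat.pow_2_r. nia.
    + reflexivity.
    + cbn [regs mk]. rewrite app_nil_r, rev_involutive. reflexivity.
  - destruct Hp as (t & R & Ht & E & HR). exists t. cbn [lab] in E. rewrite E. split; [|split].
    + unfold bnd in Ht. simpl in Ht. rewrite Nat.pow_2_r. nia.
    + reflexivity.
    + exact HR.
Qed.

Theorem mainTheorem14 : poly_many_one_reducible EquSLP TwoSoSSLP.
Proof.
  exists red. split.
  - exists P, 1000, 2. exact red_time.
  - exact red_correct.
Qed.
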